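(* The following two statements are equivalent: (i) for every Ferrers diagram $\mathcal D$, every positive integer $d$ and every finite field $\mathbb F$, there exists a $[\mathcal D,\nu_{\min}(\mathcal D,d),d]_{\mathbb F}$ code (i.e. an MFD code); (ii) for every irreducible pair $(\mathcal D,d)$ (with $\mathcal D$ a Ferrers diagram and $d$ a positive integer) and every finite field $\mathbb F$, there exists a $[\mathcal D,\nu_{\min}(\mathcal D,d),d]_{\mathbb F}$ code.
   Context: Let $\mathbb N=\{1,2,\dots\}$ and $[n]=\{1,\dots,n\}$. A Ferrers diagram is a finite subset $\mathcal D\subseteq\mathbb N^2$ such that $(x,y)\in\mathcal D$ implies $(i,j)\in\mathcal D$ for all $i\in[x]$, $j\in[y]$ (the first coordinate is the row, the second the column); it has order $n$ if $\mathcal D\subseteq[n]^2$. Its column heights are $c_i=|\mathcal D\cap(\mathbb N\times\{i\})|$. For a positive integer $d$ and $0\le j\le d-1$ let $\nu_j(\mathcal D,d)=\sum_{i\ge j+1}\max\{0,c_i-d+j\}$ (equivalently, the number of $(x,y)\in\mathcal D$ with $x\ge d-j$ and $y\ge j+1$), and $\nu_{\min}(\mathcal D,d)=\min_{0\le j\le d-1}\nu_j(\mathcal D,d)$. For a finite field $\mathbb F$ and $\mathcal D$ of order $n$, $\mathbb F^{\mathcal D}$ is the space of $n\times n$ matrices over $\mathbb F$ with entry $m_{ij}=0$ whenever $(i,j)\notin\mathcal D$. A $[\mathcal D,k,d]_{\mathbb F}$ code is a $k$-dimensional $\mathbb F$-subspace of $\mathbb F^{\mathcal D}$ whose nonzero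 elements have minimum rank $d$; it is an MFD code if $k=\nu_{\min}(\mathcal D,d)$. A point $P\in\mathcal D$ is removable if $\mathcal D\setminus\{P\}$ is a Ferrers diagram. For Ferrers diagrams $\mathcal D$ and $\mathcal D'=\mathcal D\setminus\{P\}$ with $P$ removable, write $\mathcal D'\xrightarrow{d}\mathcal D$ if $\nu_{\min}(\mathcal D',d)=\nu_{\min}(\mathcal D,d)$, and $\mathcal D\xrightarrow{d}\mathcal D'$ otherwise. The pair $(\mathcal D,d)$ is reducible if there is a Ferrers diagram $\mathcal D'$ (of any order) with $\mathcal D'\xrightarrow{d}\mathcal D$, and irreducible otherwise. *)

(* Defs.v *)
From HB Require Import structures.
From mathcomp Require Import all_boot all_order all_algebra all_field.
From mathcomp Require Import finmap.
Set Implicit Arguments. Unset Strict Implicit. Unset Printing Implicit Defensive.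
Import GRing.Theory.
Local Open Scope fset_scope.

(* A diagram is a finite set of points (row, column) of N^2, 1-indexed. *)
Definition diagram := {fset (nat * nat)}.

Definition ferrers (D : diagram) : Prop :=
  (forall p, p \in D -> (1 <= p.1)%N /\ (1 <= p.2)%N) /\
  (forall p, p \in D -> forall i j : nat,
      (1 <= i <= p.1)%N -> (1 <= j <= p.2)%N -> (i, j) \in D).

Definition of_order (n : nat) (D : diagram) : Prop :=
  forall p, p \in D -> (p.1 <= n)%N /\ (p.2 <= n)%N.

Definition nu (D : diagram) (d j : nat) : nat :=
  #|` [fset p in D | (d - j <= p.1)%N && (j.+1 <= p.2)%N] |.

Definition numin (D : diagram) (d : nat) : nat :=
  \big[minn/nu D d 0]_(j < d) nu D d j.

Definition removable (D : diagram) (P : nat * nat) : Prop :=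
  P \in D /\ ferrers (D `\ P).

Definition arrow (d : nat) (D1 D2 : diagram) : Prop :=
  (exists P, removable D2 P /\ D1 = D2 `\ P /\ numin D1 d = numin D2 d) \/
  (exists P, removable D1 P /\ D2 = D1 `\ P /\ numin D2 d <> numin D1 d).

Definition reducible (D : diagram) (d : nat) : Prop :=
  exists D', ferrers D' /\ arrow d D' D.

Definition irreducible (D : diagram) (d : nat) : Prop := ~ reducible D d.

(* M belongs to F^D (0-indexed ordinals i,j correspond to row i+1, col j+1). *)
Definition supported_in (F : fieldType) (n : nat) (D : diagram)
  (M : 'M[F]_n) : Prop :=
  forall i j : 'I_n, (i.+1, j.+1) \notin D -> M i j = 0%R.

Definition is_code (F : fieldType) (n : nat) (D : diagram) (k d : nat)
  (C : {vspace 'M[F]_n}) : Prop :=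
  \dim C = k /\
  (forall M, M \in C -> supported_in D M) /\
  (forall M, M \in C -> M != 0%R -> (d <= \rank M)%N).

(* Main.v *)
Require Import Defs.
From HB Require Import structures.
From mathcomp Require Import all_boot all_order all_algebra all_field.
From mathcomp Require Import finmap.
From mathcomp Require Import zify.
From Stdlib Require Import Classical_Prop.
Set Implicit Arguments. Unset Strict Implicit. Unset Printing Implicit Defensive.
Import GRing.Theory.

Module CombM.
Local Open Scope fset_scope.

Lemma bigmin_shift (x0 m : nat) (a : nat -> nat) :
  \big[minn/x0]_(i < m.+1) a i = minn (a 0%N) (\big[minn/x0]_(i < m) a i.+1).
Proof. by rewrite big_ord_recl; congr minn; apply: eq_bigr => i _; rewrite lift0. Qed.

Lemma bigmin_le (x0 y0 k m : nat) (a b : nat -> nat) :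
  (x0 <= y0 + k)%N -> (forall j, (j < m)%N -> (a j <= b j + k)%N) ->
  (\big[minn/x0]_(j < m) a j <= \big[minn/y0]_(j < m) b j + k)%N.
Proof.
move=> h0; elim: m a b => [|m IH] a b H; first by rewrite !big_ord0.
rewrite !bigmin_shift.
have h1 := IH (fun j => a j.+1) (fun j => b j.+1) (fun j hj => H j.+1 hj).
have h2 := H 0%N (ltn0Sn m).
move: h1 h2; set A := \big[minn/x0]_(i < m) a i.+1; set B := \big[minn/y0]_(i < m) b i.+1.
lia.
Qed.

Lemma bigmin_term (x0 m : nat) (a : nat -> nat) j : (j < m)%N ->
  (\big[minn/x0]_(i < m) a i <= a j)%N.
Proof.
elim: m a j => [|m IH] a j //= hj; rewrite bigmin_shift.
case: j hj => [|j] hj; first by apply: geq_minl.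
have := IH (fun j => a j.+1) j hj; set A := \big[minn/x0]_(i < m) a i.+1; lia.
Qed.

Lemma bigmin_x0 (x0 m : nat) (a : nat -> nat) :
  (\big[minn/x0]_(i < m) a i <= x0)%N.
Proof.
elim: m a => [|m IH] a; first by rewrite big_ord0.
rewrite bigmin_shift; have := IH (fun j => a j.+1); set A := \big[minn/x0]_(i < m) a i.+1; lia.
Qed.

Lemma numin_le_nu D d j : (j < d)%N -> (numin D d <= nu D d j)%N.
Proof. exact: bigmin_term. Qed.

Lemma numin_le_nu0 D d : (numin D d <= nu D d 0)%N.
Proof. exact: bigmin_x0. Qed.

Lemma nu_le_card D d j : (nu D d j <= #|` D|)%N.
Proof.
apply: fsubset_leq_card; apply/fsubsetP => p; rewrite !inE; by case/andP.
Qed.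

Lemma numin_le_card D d : (numin D d <= #|` D|)%N.
Proof. exact: leq_trans (numin_le_nu0 D d) (nu_le_card D d 0). Qed.

Lemma nu_sub D E d j : D `<=` E -> (nu D d j <= nu E d j)%N.
Proof.
move=> /fsubsetP sDE; apply: fsubset_leq_card; apply/fsubsetP => p.
rewrite !inE => /andP[/sDE -> ->]; done.
Qed.

Lemma nu_add E P d j : (nu E d j <= nu (E `\ P) d j + 1)%N.
Proof.
rewrite /nu.
set A := [fset p in E | _]; set B := [fset p in E `\ P | _].
have : A `<=` P |` B.
  apply/fsubsetP => p; rewrite !inE => /andP[hE hc].
  case: (p =P P) => //= hp; rewrite hE hc /=; by apply/eqP.
move/fsubset_leq_card; rewrite cardfsU1; case: (P \notin B) => /=; lia.
Qed.

Lemma numin_sub D E d : D `<=` E -> (numin D d <= numin E d)%N.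
Proof.
move=> h; rewrite -[numin E d]addn0; apply: bigmin_le.
  by rewrite addn0 nu_sub.
by move=> j _; rewrite addn0 nu_sub.
Qed.

Lemma numin_add E P d : (numin E d <= numin (E `\ P) d + 1)%N.
Proof. apply: bigmin_le; first exact: nu_add. by move=> j _; apply: nu_add. Qed.

Lemma card_gen E (s : seq (nat * nat)) S0 :
  uniq s -> S0 `<=` E -> {subset s <= E} -> (forall x, x \in s -> x \notin S0) ->
  (size s <= #|` E| - #|` S0|)%N.
Proof.
move=> us sS0 sE nS0.
rewrite -cardfsDS // -(undup_id us) -card_fseq.
apply: fsubset_leq_card; apply/fsubsetP => x; rewrite !inE => hx.
by rewrite (nS0 x hx) sE.
Qed.

Lemma coord_bound E d p : ferrers E -> (2 <= d)%N -> p \in E ->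
  (p.2 <= #|` E| - numin E d)%N /\ (p.1 <= #|` E| - numin E d)%N.
Proof.
move=> [fpos fdown] hd; case: p => a b hp /=.
have [/= hp1 hp2] := fpos _ hp.
split.
- have h := @card_gen E [seq (1%N, k) | k <- iota 1 b]
     [fset q in E | (d - 0 <= q.1)%N && (0.+1 <= q.2)%N].
  rewrite size_map size_iota in h.
  have := numin_le_nu0 E d.
  have : (b <= #|` E| - nu E d 0)%N.
    apply: h.
    + by rewrite map_inj_uniq ?iota_uniq // => u v [].
    + by apply/fsubsetP => q; rewrite !inE => /andP[].
    + move=> x /mapP[k]; rewrite mem_iota => hk ->.
      apply: (fdown _ hp) => /=; lia.
    + move=> x /mapP[k] _ ->; rewrite !inE /=; apply/negP => /andP[_ /andP[h1 _]].
      lia.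
  by move=> h1 h2; apply: (leq_trans h1); apply: leq_sub2l.
- have h := @card_gen E [seq (k, 1%N) | k <- iota 1 a]
     [fset q in E | (d - d.-1 <= q.1)%N && (d.-1.+1 <= q.2)%N].
  rewrite size_map size_iota in h.
  have := @numin_le_nu E d d.-1 ltac:(lia).
  have : (a <= #|` E| - nu E d d.-1)%N.
    apply: h.
    + by rewrite map_inj_uniq ?iota_uniq // => u v [].
    + by apply/fsubsetP => q; rewrite !inE => /andP[].
    + move=> x /mapP[k]; rewrite mem_iota => hk ->.
      apply: (fdown _ hp) => /=; lia.
    + move=> x /mapP[k] _ ->; rewrite !inE /=; apply/negP => /andP[_ /andP[_ h1]].
      lia.
  by move=> h1 h2; apply: (leq_trans h1); apply: leq_sub2l.
Qed.

Lemma card_bound E d : ferrers E -> (2 <= d)%N ->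
  (#|` E| <= (#|` E| - numin E d) * (#|` E| - numin E d))%N.
Proof.
move=> fE hd.
set s := [seq (a, b) | a <- iota 1 (#|` E| - numin E d), b <- iota 1 (#|` E| - numin E d)].
have hc := card_fseq s.
have : (#|` E| <= #|` [fset x in s]|)%N.
  apply: fsubset_leq_card; apply/fsubsetP => p hp; rewrite inE.
  have [h2 h1] := coord_bound fE hd hp.
  have [q1 q2] := fE.1 p hp.
  case: p hp h1 h2 q1 q2 => a b hp /= h1 h2 q1 q2.
  apply/allpairsP; exists (a, b) => /=; rewrite !mem_iota; split => //.
    by rewrite q1 /= add1n ltnS.
  by rewrite q2 /= add1n ltnS.
rewrite hc => h; apply: leq_trans h _.
by rewrite (leq_trans (size_undup _)) // size_allpairs !size_iota.
Qed.

End CombM.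
Import CombM.

Module LAM.
Local Open Scope ring_scope.

Lemma sub_dim (F : fieldType) (vT : vectType F) (V : {vspace vT}) k :
  (k <= \dim V)%N -> exists W : {vspace vT}, (W <= V)%VS /\ \dim W = k.
Proof.
move=> hk; set X := vbasis V.
have fX : free X := basis_free (vbasisP V).
have fT : free (take k X).
  by apply: (@catl_free _ _ (drop k X)); rewrite cat_take_drop.
exists <<take k X>>%VS; split.
  apply/span_subvP => v /mem_take; exact: vbasis_mem.
by rewrite (eqP fT) size_take size_tuple; case: ltngtP hk => //= ->.
Qed.

Section Restrict.
Variables (F : fieldType) (N : nat).

Definition ephi (i j : 'I_N) : 'Hom('M[F]_N, 'M[F]_1) :=
  linfun (mulmxr (delta_mx j (0:'I_1) : 'M[F]_(N,1)) \o mulmx (delta_mx (0:'I_1) i : 'M[F]_(1,N))).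

Lemma ephiE i j M : ephi i j M = col j (row i M).
Proof. by rewrite lfunE /= rowE colE. Qed.

Lemma ephi0 i j M : ephi i j M = 0 -> M i j = 0.
Proof. by rewrite ephiE => /matrixP /(_ 0 0); rewrite !mxE. Qed.

Lemma restrict_code (D' : diagram) (P : nat * nat) k d (C : {vspace 'M[F]_N}) :
  is_code D' k.+1 d C -> (1 <= P.1 <= N)%N -> (1 <= P.2 <= N)%N ->
  exists C2 : {vspace 'M[F]_N}, is_code (D' `\ P)%fset k d C2.
Proof.
move=> [dC [sC rC]] h1 h2.
have hi : (P.1.-1 < N)%N by lia.
have hj : (P.2.-1 < N)%N by lia.
set i : 'I_N := Ordinal hi; set j : 'I_N := Ordinal hj.
have hk : (k <= \dim (C :&: lker (ephi i j)))%N.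
  have := limg_ker_dim (ephi i j) C.
  have : (\dim (ephi i j @: C) <= 1)%N.
    by rewrite (leq_trans (dimvS (subvf _))) // dimvf dim_matrix.
  rewrite dC; move: (\dim (C :&: _)) (\dim (_ @: C)) => x y; lia.
have [W [sW dW]] := sub_dim hk.
exists W; split => //; split.
- move=> M /(subvP sW); rewrite memv_cap memv_ker => /andP[MC /eqP /ephi0 Mij].
  move=> a b; rewrite in_fsetD1 negb_and negbK => /orP[/eqP hP | hD]; last exact: sC.
  suff [-> ->] : a = i /\ b = j by [].
  by split; apply: val_inj; rewrite /= -hP.
- move=> M /(subvP sW); rewrite memv_cap => /andP[MC _]; exact: rC.
Qed.
End Restrict.

Section Shrink.
Variables (F : fieldType) (n N : nat) (le : (n <= N)%N).

Definition Lm : 'M[F]_(N,n) := \matrix_(a, b) ((a : nat) == b)%:R.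

Lemma mulLr m (A : 'M[F]_(m,N)) x b : (A *m Lm) x b = A x (widen_ord le b).
Proof.
rewrite mxE (bigD1 (widen_ord le b)) //= mxE eqxx mulr1 big1 ?addr0 // => y hy.
rewrite mxE; case: eqP => [e|_]; last by rewrite mulr0.
by case/eqP: hy; apply: val_inj.
Qed.

Lemma mulTLl m (A : 'M[F]_(N,m)) a y : (Lm^T *m A) a y = A (widen_ord le a) y.
Proof.
rewrite mxE (bigD1 (widen_ord le a)) //= !mxE eqxx mul1r big1 ?addr0 // => z hz.
rewrite !mxE; case: eqP => [e|_]; last by rewrite mul0r.
by case/eqP: hz; apply: val_inj.
Qed.

Lemma mulLl_lt m (B : 'M[F]_(n,m)) (x : 'I_N) y (hx : (x < n)%N) :
  (Lm *m B) x y = B (Ordinal hx) y.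
Proof.
rewrite mxE (bigD1 (Ordinal hx)) //= mxE eqxx mul1r big1 ?addr0 // => z hz.
rewrite mxE; case: eqP => [e|_]; last by rewrite mul0r.
by case/eqP: hz; apply: val_inj.
Qed.

Lemma mulLl_ge m (B : 'M[F]_(n,m)) (x : 'I_N) y : (n <= x)%N -> (Lm *m B) x y = 0.
Proof.
move=> hx; rewrite mxE big1 // => z _; rewrite mxE; case: eqP => [e|_]; last by rewrite mul0r.
by move: (ltn_ord z); rewrite -e ltnNge hx.
Qed.

Lemma mulLTr_lt m (B : 'M[F]_(m,n)) x (y : 'I_N) (hy : (y < n)%N) :
  (B *m Lm^T) x y = B x (Ordinal hy).
Proof.
rewrite mxE (bigD1 (Ordinal hy)) //= !mxE eqxx mulr1 big1 ?addr0 // => z hz.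
rewrite !mxE; case: eqP => [e|_]; last by rewrite mulr0.
by case/eqP: hz; apply: val_inj.
Qed.

Lemma mulLTr_ge m (B : 'M[F]_(m,n)) x (y : 'I_N) : (n <= y)%N -> (B *m Lm^T) x y = 0.
Proof.
move=> hy; rewrite mxE big1 // => z _; rewrite !mxE; case: eqP => [e|_]; last by rewrite mulr0.
by move: (ltn_ord z); rewrite -e ltnNge hy.
Qed.

Lemma shrink_id (M : 'M[F]_N) :
  (forall x y : 'I_N, (n <= x)%N || (n <= y)%N -> M x y = 0) ->
  Lm *m (Lm^T *m M *m Lm) *m Lm^T = M.
Proof.
move=> hM; apply/matrixP => x y.
case: (ltnP y n) => hy; last first.
  rewrite mulLTr_ge //; symmetry; apply: hM; by rewrite hy orbT.
rewrite mulLTr_lt.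
case: (ltnP x n) => hx; last first.
  rewrite mulLl_ge //; symmetry; apply: hM; by rewrite hx.
rewrite mulLl_lt mulLr mulTLl.
by congr (M _ _); apply: val_inj.
Qed.

Definition shr : 'Hom('M[F]_N, 'M[F]_n) := linfun (mulmxr Lm \o mulmx Lm^T).

Lemma shrE M : shr M = Lm^T *m M *m Lm.
Proof. by rewrite lfunE. Qed.

Lemma shrink_code (D : diagram) k d (C : {vspace 'M[F]_N}) :
  of_order n D -> is_code D k d C ->
  exists C2 : {vspace 'M[F]_n}, is_code D k d C2.
Proof.
move=> oD [dC [sC rC]].
have hz M : M \in C -> forall x y : 'I_N, (n <= x)%N || (n <= y)%N -> M x y = 0.
  move=> MC x y hxy; apply: (sC M MC); apply/negP => /oD /= [h1 h2].
  by case/orP: hxy; lia.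
have hid M : M \in C -> Lm *m shr M *m Lm^T = M.
  by move=> MC; rewrite shrE shrink_id // => x y; apply: hz.
exists (shr @: C)%VS; split; [|split].
- rewrite limg_dim_eq // ; apply/eqP; rewrite -subv0; apply/subvP => M.
  rewrite memv_cap memv_ker memv0 => /andP[MC /eqP h0].
  by rewrite -(hid M MC) h0 mulmx0 mul0mx.
- move=> M' /memv_imgP[M MC ->] a b hab.
  rewrite shrE mulLr mulTLl; apply: (sC M MC) => /=; exact: hab.
- move=> M' /memv_imgP[M MC ->] hne.
  have MN : M != 0 by apply: contraNneq hne => ->; rewrite linear0.
  apply: (leq_trans (rC M MC MN)).
  rewrite -{1}(hid M MC).
  exact: leq_trans (mxrankM_maxl _ _) (mxrankM_maxr _ _).
Qed.
End Shrink.

Lemma full_space (F : fieldType) n (S : diagram) :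
  (forall p, p \in S -> (1 <= p.1 <= n)%N /\ (1 <= p.2 <= n)%N) ->
  exists V : {vspace 'M[F]_n}, \dim V = #|` S|%fset /\
    (forall M, M \in V -> supported_in S M).
Proof.
move hs: #|` S|%fset => s; elim: s S hs => [|s IH] S hs hS.
  exists 0%VS; rewrite dimv0; split => // M; rewrite memv0 => /eqP -> a b _.
  by rewrite mxE.
have : S != fset0 by rewrite -cardfs_gt0 hs.
case/fset0Pn => p pS.
have hs' : #|` (S `\ p)%fset|%fset = s.
  by move: hs; rewrite (cardfsD1 p S) pS add1n => -[].
have hS' : forall q, q \in (S `\ p)%fset -> (1 <= q.1 <= n)%N /\ (1 <= q.2 <= n)%N.
  by move=> q; rewrite in_fsetD1 => /andP[_ qS]; exact: hS.
have [V' [dV' sV']] := IH _ hs' hS'.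
have [/andP[h11 h12] /andP[h21 h22]] := hS p pS.
have hi : (p.1.-1 < n)%N by lia.
have hj : (p.2.-1 < n)%N by lia.
set i : 'I_n := Ordinal hi; set j : 'I_n := Ordinal hj.
set dl : 'M[F]_n := delta_mx i j.
have dlij : dl i j = 1 by rewrite mxE !eqxx.
have ep : ((i:nat).+1, (j:nat).+1) = p.
  by rewrite /i /j /= !prednK // -surjective_pairing.
have zij M : M \in V' -> M i j = 0.
  move=> MV; apply: (sV' M MV); rewrite in_fsetD1 negb_and negbK; apply/orP; left.
  by rewrite ep.
exists (V' + <[dl]>)%VS; split.
  rewrite dimv_disjoint_sum; last first.
    apply/eqP; rewrite -subv0; apply/subvP => M.
    rewrite memv_cap memv0 => /andP[MV /vlineP[c hc]].
    have := zij M MV; rewrite hc mxE dlij mulr1 => ->; by rewrite scale0r.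
  have -> : \dim V' = s by rewrite dV'.
  rewrite dim_vline.
  have -> : dl != 0 by apply/eqP => /matrixP /(_ i j); rewrite dlij mxE; apply/eqP; exact: oner_neq0.
  by rewrite addn1.
move=> M /memv_addP[u uV [v /vlineP[c ->] ->]] a b hab.
rewrite !mxE.
have -> : u a b = 0.
  apply: (sV' u uV); rewrite in_fsetD1 negb_and hab orbT //.
case: eqP => [ea|]; case: eqP => [eb|] /=; rewrite ?mulr0 ?add0r //.
case/negP: hab; subst a b; rewrite /=.
by rewrite ep.
Qed.

End LAM.
Import LAM.


Lemma claim (F : fieldType) d N :
  (2 <= d)%N ->
  (forall D, ferrers D -> of_order N D -> irreducible D d ->
     exists C : {vspace 'M[F]_N}, is_code D (numin D d) d C) ->
  forall D, ferrers D -> (#|` D| - numin D d <= N)%N ->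
     exists C : {vspace 'M[F]_N}, is_code D (numin D d) d C.
Proof.
move=> hd H2.
suff: forall c D, (#|` D| - numin D d)%N = c -> ferrers D -> (c <= N)%N ->
     exists C : {vspace 'M[F]_N}, is_code D (numin D d) d C.
  by move=> h D fD hN; apply: h fD hN.
elim/ltn_ind => c IHc.
suff: forall t D, (c * c - #|` D|)%N = t -> (#|` D| - numin D d)%N = c -> ferrers D -> (c <= N)%N ->
     exists C : {vspace 'M[F]_N}, is_code D (numin D d) d C.
  by move=> h D; apply: h.
elim/ltn_ind => t IHt D ht hc fD hcN.
case: (classic (reducible D d)) => [|hirr]; last first.
  apply: H2 => // p pD; have := coord_bound fD hd pD; rewrite hc; lia.
move=> [D' [fD' [[P [[PD _] [eD' eqn]]] | [P [[PD' _] [eD neq]]]]]].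
-
  have hcard : #|` D| = (#|` D'|).+1 by rewrite eD' (cardfsD1 P D) PD.
  have hle := numin_le_card D' d.
  have [C hC] : exists C : {vspace 'M[F]_N}, is_code D' (numin D' d) d C.
    apply: (IHc (#|` D'| - numin D' d)%N) => //.
      rewrite -hc hcard eqn; lia.
    rewrite -hc in hcN; lia.
  exists C; case: hC => [dC [sC rC]]; split; first by rewrite dC eqn.
  split => // M MC a b hab; apply: (sC M MC); rewrite eD' in_fsetD1 negb_and hab orbT //.
-
  subst D.
  have hcard : #|` D'| = (#|` (D' `\ P)%fset|).+1 by rewrite (cardfsD1 P D') PD'.
  have h1 := numin_add D' P d.
  have h2 := numin_sub d (fsubD1set D' P).
  have hnu : numin D' d = (numin (D' `\ P)%fset d).+1.
    move: neq h1 h2; lia.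
  have hc' : (#|` D'| - numin D' d)%N = c by rewrite hcard hnu subSS.
  have hb := card_bound fD' hd; rewrite hc' in hb.
  have [C hC] : exists C : {vspace 'M[F]_N}, is_code D' (numin D' d) d C.
    apply: (IHt (c * c - #|` D'|)%N) => //.
    rewrite -ht hcard; lia.
  rewrite hnu in hC.
  have [q1 q2] := fD'.1 P PD'.
  have [b2 b1] := coord_bound fD' hd PD'.
  rewrite hc' in b1 b2.
  apply: (restrict_code hC).
    by apply/andP; split; [exact: q1 | exact: leq_trans b1 hcN].
  by apply/andP; split; [exact: q2 | exact: leq_trans b2 hcN].
Qed.

Lemma numin1 D : ferrers D -> numin D 1 = #|` D|.
Proof.
move=> fD; rewrite /numin bigmin_shift big_ord0 minnn.
apply/eqP; rewrite eqn_leq nu_le_card /=.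
apply: fsubset_leq_card; apply/fsubsetP => p pD; rewrite !inE pD /=.
by have [-> ->] := fD.1 p pD.
Qed.

Theorem theorem3p14 :
  (forall (n : nat) (D : diagram) (d : nat) (F : finFieldType),
      ferrers D -> of_order n D -> (0 < d)%N ->
      exists C : {vspace 'M[F]_n}, is_code D (numin D d) d C)
  <->
  (forall (n : nat) (D : diagram) (d : nat) (F : finFieldType),
      ferrers D -> of_order n D -> (0 < d)%N -> irreducible D d ->
      exists C : {vspace 'M[F]_n}, is_code D (numin D d) d C).
Proof.
split.
  by move=> H n D d F fD oD hd _; apply: H.
move=> H n D d F fD oD hd.
case: (ltnP 1 d) => hd2; last first.
  have -> : d = 1%N by lia.
  have hS : forall p, p \in D -> (1 <= p.1 <= n)%N /\ (1 <= p.2 <= n)%N.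
    move=> p pD; have [q1 q2] := fD.1 p pD; have [o1 o2] := oD p pD.
    by rewrite q1 q2 o1 o2.
  have [V [dV sV]] := full_space F hS.
  exists V; split; first by rewrite dV numin1.
  split => // M _ hM; by rewrite lt0n mxrank_eq0.
set c := (#|` D| - numin D d)%N.
have hn : (n <= maxn n c)%N by rewrite leq_maxl.
have [C hC] := @claim F d (maxn n c) hd2
  (fun D fD oD hirr => H _ D d F fD oD hd hirr) D fD (leq_maxr n c).
have [C2 h2] := shrink_code hn oD hC.
by exists C2.
Qed.
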